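(* Let $1\le k\le s\le d$. Let $\Phi=\mathbb{E}_{S\subseteq[d],|S|=s}\,\phi_S^{\otimes k}$ and \[ \tilde\Phi=\mathbb{E}_{S\subseteq[d],|S|=s}\left[\frac{1}{s^{\underline{k}}}\sum_{\vec i,\vec j\in A(S,k)}|\vec i\rangle\langle\vec j|\right], \] where $S$ is a uniformly random subset of $[d]$ of size $s$. Then $\|\Phi-\tilde\Phi\|_1=O(k/\sqrt{s})$ (with an absolute implied constant).
   Context: $\phi_S=\left(\frac{1}{\sqrt{s}}\sum_{i\in S}|i\rangle\right)\left(\frac{1}{\sqrt{s}}\sum_{i\in S}\langle i|\right)$ for $S\subseteq[d]$ with $|S|=s$, in the computational basis of $\mathbb{C}^d$. $A(S,k)=\{(i_1,\dots,i_k)\in S^k: i_j\ne i_{j'}\text{ for }j\ne j'\}$; $|\vec i\rangle=|i_1\rangle\otimes\cdots\otimes|i_k\rangle$. $n^{\underline{k}}=n(n-1)\cdots(n-k+1)$. $\|\cdot\|_1$ is the trace norm. *)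

(* Defs.v *)
(* scalars are algC (algebraic complex numbers, which contain
   all the entries of the matrices below; trace norm computed over algC). *)
From HB Require Import structures.
From mathcomp Require Import all_boot all_order all_algebra all_field.
Set Implicit Arguments. Unset Strict Implicit. Unset Printing Implicit Defensive.
Import Order.TTheory GRing.Theory Num.Theory.
Local Open Scope ring_scope.

(* computational-basis index set of (C^d)^{ot k}: k-tuples (i_1..i_k) of [d] *)
Definition tup (d k : nat) := {ffun 'I_k -> 'I_d}.

Definition mx_of (d k : nat) (f : tup d k -> tup d k -> algC)
  : 'M[algC]_(#|{: tup d k}|) :=
  \matrix_(a, b) f (enum_val a) (enum_val b).

Definition tensor_pow (d k : nat) (M : 'M[algC]_d) : 'M[algC]_(#|{: tup d k}|) :=
  mx_of (fun i j : tup d k => \prod_(t < k) M (i t) (j t)).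

(* phi_S = |u_S><u_S| with u_S = s^{-1/2} sum_{i in S} |i>, s = |S| *)
Definition phi (d : nat) (S : {set 'I_d}) : 'M[algC]_d :=
  \matrix_(i, j) (if (i \in S) && (j \in S) then (#|S|%:R)^-1 else 0).

Definition unif_exp (d s n : nat) (F : {set 'I_d} -> 'M[algC]_n) : 'M[algC]_n :=
  (#|[set S : {set 'I_d} | #|S| == s]|%:R)^-1 *:
    \sum_(S : {set 'I_d} | #|S| == s) F S.

Definition inA (d k : nat) (S : {set 'I_d}) (i : tup d k) : bool :=
  [forall t, i t \in S] && injectiveb i.

Definition Phi (d s k : nat) : 'M[algC]_(#|{: tup d k}|) :=
  unif_exp s (fun S => tensor_pow k (phi S)).

Definition Phitilde (d s k : nat) : 'M[algC]_(#|{: tup d k}|) :=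
  unif_exp s (fun S => mx_of (fun i j : tup d k =>
     ((s ^_ k)%:R)^-1 * (inA S i && inA S j)%:R)).

Definition eigvals (n : nat) (A : 'M[algC]_n) : seq algC :=
  sval (closed_field_poly_normal (char_poly A)).

Definition adjointmx (n : nat) (A : 'M[algC]_n) : 'M[algC]_n :=
  \matrix_(i, j) (A j i)^*.

Definition trnorm (n : nat) (A : 'M[algC]_n) : algC :=
  \sum_(z <- eigvals (adjointmx A *m A)) sqrtC z.

(* Main.v *)
Require Import Defs.
From HB Require Import structures.
From mathcomp Require Import all_boot all_order all_algebra all_field.
From mathcomp Require Import zify ring.
Import Order.TTheory GRing.Theory Num.Theory.

Lemma ffact_le s k : s ^_ k <= s ^ k.
Proof.
elim: k => [|k IH]; first by rewrite ffactn0 expn0.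
rewrite ffactnSr expnSr leq_mul //; exact: leq_subr.
Qed.

Lemma ffact_bound s k : s * s ^ k <= s * s ^_ k + k * k * s ^ k.
Proof.
elim: k => [|k IH]; first by rewrite ffactn0 expn0 !muln1 mul0n addn0.
have h1 : s * s ^_ k <= s ^_ k.+1 + k * s ^ k.
  rewrite ffactnSr.
  case: (leqP k s) => hks.
    have := ffact_le s k; nia.
  by rewrite ffact_small // muln0.
have h3 : s * (s * s ^ k) <= s * (s * s ^_ k) + s * (k * k * s ^ k).
  by rewrite -mulnDr leq_mul2l IH orbT.
have h4 : s * (s * s ^_ k) <= s * s ^_ k.+1 + s * (k * s ^ k).
  by rewrite -mulnDr leq_mul2l h1 orbT.
rewrite expnSr.
set A := s ^ k in h3 h4 *; set B := s ^_ k in h3 h4 *; set D := s ^_ k.+1 in h4 *.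
nia.
Qed.

Local Open Scope ring_scope.

Module Helpers.
Import Num.Def.
Set Implicit Arguments. Unset Strict Implicit. Unset Printing Implicit Defensive.
Local Open Scope ring_scope.
Local Open Scope sesquilinear_scope.

Lemma char_poly_simil (R : comUnitRingType) n (P A : 'M[R]_n) : P \in unitmx ->
  char_poly (invmx P *m A *m P) = char_poly A.
Proof.
move=> Pu.
have e1 : map_mx polyC (invmx P) *m map_mx polyC P = 1%:M.
  by rewrite -map_mxM mulVmx // map_mx1.
rewrite /char_poly.
have -> : char_poly_mx (invmx P *m A *m P) =
   map_mx polyC (invmx P) *m char_poly_mx A *m map_mx polyC P.
  rewrite /char_poly_mx mulmxBr mulmxBl !map_mxM; congr (_ - _).
  by rewrite -mulmxA -scalar_mxC mulmxA e1 mul1mx.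
by rewrite !det_mulmx mulrAC -det_mulmx e1 det1 mul1r.
Qed.

Lemma eigvals_simil n (P : 'M[algC]_n) x : P \in unitmx ->
  perm_eq (eigvals (invmx P *m diag_mx x *m P)) [seq x 0 i | i <- enum 'I_n].
Proof.
move=> Pu; rewrite /eigvals; case: closed_field_poly_normal => r /= Hr.
apply: prod_XsubC_eq.
move: Hr; rewrite char_poly_simil // (monicP (char_poly_monic _)) scale1r => <-.
rewrite char_poly_trig ?diag_mx_is_trig // big_map big_enum /=.
by apply: eq_bigr => i _; rewrite mxE eqxx mulr1n.
Qed.

Lemma tcE (C : numClosedFieldType) n (P : 'M[C]_n) a : P \is unitarymx ->
  (invmx P *m diag_mx a *m P)^t* = invmx P *m diag_mx (map_mx conjC a) *m P.
Proof.
move=> Pu; rewrite !trmx_mul !map_mxM tr_diag_mx map_diag_mx invmx_unitary //.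
by rewrite trmxCK mulmxA.
Qed.

Lemma mulE (R : comUnitRingType) n (P : 'M[R]_n) a b : P \in unitmx ->
  (invmx P *m diag_mx a *m P) *m (invmx P *m diag_mx b *m P) =
  invmx P *m diag_mx (\row_j (a 0 j * b 0 j)) *m P.
Proof.
move=> Pu; by rewrite !mulmxA mulmxK // -(mulmxA (invmx P)) mulmx_diag.
Qed.

Lemma adjE n (M : 'M[algC]_n) : adjointmx M = M^t*.
Proof. by apply/matrixP => i j; rewrite !mxE. Qed.

Lemma trnorm_normal n (M : 'M[algC]_n) : M \is normalmx ->
  exists U : 'M_n, [/\ U \is unitarymx, trnorm M = \tr (M *m U)
                    & trnorm M \is Num.real].
Proof.
move=> /orthomx_spectralP; set P := spectralmx M; set x := spectral_diag M => EM.
have Pu : P \is unitarymx by apply: spectral_unitarymx.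
have Pi : P \in unitmx by apply: unitarymx_unit.
have Htr : trnorm M = \sum_i `|x 0 i|.
  rewrite /trnorm adjE EM tcE // mulE //.
  rewrite (perm_big _ (@eigvals_simil _ _ _ Pi)) big_map big_enum /=.
  apply: eq_bigr => i _; by rewrite mxE mxE mulrC -normCK sqrCK.
pose e := \row_i (if x 0 i == 0 then 1 else `|x 0 i| / x 0 i).
exists (invmx P *m diag_mx e *m P); split.
- apply/unitarymxP; rewrite tcE // mulE //.
  have -> : \row_j (e 0 j * (map_mx conjC e) 0 j) = const_mx 1.
    apply/rowP => j; rewrite !mxE; case: ifP => [_|/negbT nz].
      by rewrite conjC1 mulr1.
    by rewrite -normCK normf_div normr_id divff ?expr1n // normr_eq0.
  by rewrite diag_const_mx mulmx1 mulVmx.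
- rewrite Htr EM mulE // mxtrace_mulC mulmxA mulmxV // mul1mx mxtrace_diag.
  apply: eq_bigr => i _; rewrite !mxE; case: eqP => [->|/eqP nz].
    by rewrite normr0 mul0r.
  by rewrite mulrC divfK.
- by rewrite Htr rpred_sum // => i _; rewrite normr_real.
Qed.

Lemma cs_ineq (C : numClosedFieldType) n (x z : 'cV[C]_n) (t : C) :
  map_mx conjC x = x -> 0 < t ->
  (x^T *m z) 0 0 + ((x^T *m z) 0 0)^* <=
    t * (x^T *m x) 0 0 + (z^t* *m z) 0 0 / t.
Proof.
move=> /matrixP hx0 tgt0.
have hx j : (x j 0)^* = x j 0 by have := hx0 j 0; rewrite mxE.
have ht : t^* = t by apply/CrealP; rewrite gtr0_real.
rewrite !mxE.
under eq_bigr => j _ do rewrite !mxE.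
under [X in _ <= t * X + _]eq_bigr => j _ do rewrite !mxE.
under [X in _ <= _ + X / _]eq_bigr => j _ do rewrite !mxE.
set E := \sum_j _ * _.
set X := \sum_j x j 0 * x j 0.
set Z := \sum_j _ * _.
have key : 0 <= t * t * X - t * (E + E^*) + Z.
  have -> : t * t * X - t * (E + E^*) + Z =
     \sum_j ((t * x j 0 - z j 0)^* * (t * x j 0 - z j 0)).
    rewrite /E /X /Z rmorph_sum -big_split /= !mulr_sumr -sumrN -!big_split /=.
    by apply: eq_bigr => j _; rewrite !rmorphB !rmorphM /= hx ht; ring.
  apply: sumr_ge0 => j _; rewrite mulrC -normCK; exact: exprn_ge0.
have tn0 : t != 0 by rewrite gt_eqF.
rewrite -(ler_pM2l tgt0) -subr_ge0.
have -> : t * (t * X + Z / t) - t * (E + conjC E) = t * t * X - t * (E + conjC E) + Z.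
  by field.
exact: key.
Qed.

Lemma normU (C : numClosedFieldType) n (U : 'M[C]_n) (x : 'cV_n) :
  U \is unitarymx -> (U *m x)^t* *m (U *m x) = x^t* *m x.
Proof.
move=> Uu; rewrite trmx_mul map_mxM -mulmxA (mulmxA (U^t*)).
by rewrite -invmx_unitary // mulVmx ?unitarymx_unit // mul1mx.
Qed.

Lemma pair_bound (C : numClosedFieldType) n (U : 'M[C]_n) (v w : 'cV_n) (t : C) :
  U \is unitarymx -> map_mx conjC v = v -> map_mx conjC w = w ->
  (v^T *m v) 0 0 = 1 -> (w^T *m w) 0 0 = 1 -> 0 < t ->
  \tr ((v *m v^T - w *m w^T) *m U) + (\tr ((v *m v^T - w *m w^T) *m U))^*
   <= 2 * t * ((v - w)^T *m (v - w)) 0 0 + 2 / t.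
Proof.
move=> Uu hv hw nv nw tgt0.
have hvw : map_mx conjC (v - w) = v - w by rewrite map_mxB hv hw.
have Hq : \tr ((v *m v^T - w *m w^T) *m U) =
   ((v - w)^T *m (U *m v)) 0 0 + ((v - w)^T *m (U^T *m w)) 0 0.
  have -> : ((v - w)^T *m (U^T *m w)) 0 0 = (w^T *m U *m (v - w)) 0 0.
    have h1 (A : 'M[C]_1) : A 0 0 = A^T 0 0 by rewrite mxE.
    by rewrite [RHS]h1 !trmx_mul trmxK mulmxA.
  rewrite mulmxBl raddfB /= -!mulmxA (mxtrace_mulC v) (mxtrace_mulC w) !trace_mx11.
  have hB (X Y : 'M[C]_1) : (X - Y) 0 0 = X 0 0 - Y 0 0 by rewrite !mxE.
  rewrite linearB /= mulmxBl !mulmxBr !hB !mulmxA; ring.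
have tv : v^t* = v^T by rewrite -map_trmx hv.
have tw : w^t* = w^T by rewrite -map_trmx hw.
have b1 := @cs_ineq C n (v - w) (U *m v) t hvw tgt0.
have b2 := @cs_ineq C n (v - w) (U^T *m w) t hvw tgt0.
rewrite normU // tv nv in b1.
rewrite normU ?trmx_unitary // tw nw in b2.
rewrite Hq rmorphD /=.
have -> : 2 * t * ((v - w)^T *m (v - w)) 0 0 + 2 / t =
  (t * ((v - w)^T *m (v - w)) 0 0 + 1 / t) + (t * ((v - w)^T *m (v - w)) 0 0 + 1 / t).
  by rewrite -mulr2n mulr2n; field; rewrite gt_eqF.
rewrite addrACA; exact: lerD.
Qed.

Lemma sum_enum d k (F : tup d k -> algC) :
  \sum_(a < #|{: tup d k}|) F (enum_val a) = \sum_i F i.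
Proof.
by rewrite -big_enum_val; apply: eq_bigl => i; rewrite inE.
Qed.

Lemma sum_bool (T : finType) (b : pred T) :
  \sum_(i : T) (b i)%:R = #|b|%:R :> algC.
Proof.
rewrite -natr_sum; congr (_%:R); rewrite -sum1_card [RHS]big_mkcond /=.
by apply: eq_bigr => i _; rewrite unfold_in; case: (b i).
Qed.

Lemma prod_if k (P : pred 'I_k) (c : algC) :
  \prod_(t < k) (if P t then c else 0) = if [forall t, P t] then c ^+ k else 0.
Proof.
case: forallP => [H|H].
  by rewrite (eq_bigr (fun _ => c)) ?prodr_const ?card_ord // => t _; rewrite H.
case: (pickP (fun t => ~~ P t)) => [t nt|H2].
  by rewrite (bigD1 t) //= ifN // mul0r.
by exfalso; apply: H => t; move: (H2 t) => /= /negbFE.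
Qed.

Definition inS d k (S : {set 'I_d}) (i : tup d k) : bool := [forall t, i t \in S].
Arguments inS {d k} S i.

Definition vS d k (s : nat) (S : {set 'I_d}) : 'cV[algC]_(#|{: tup d k}|) :=
  \col_a ((inS S (enum_val a))%:R / sqrtC ((s ^ k)%:R)).

Definition wS d k (s : nat) (S : {set 'I_d}) : 'cV[algC]_(#|{: tup d k}|) :=
  \col_a ((inA S (enum_val a))%:R / sqrtC ((s ^_ k)%:R)).
Arguments vS {d} k s S.
Arguments wS {d} k s S.

Lemma sqrt_nat_sq (n : nat) : sqrtC (n%:R : algC) * sqrtC n%:R = n%:R.
Proof. by rewrite -expr2 sqrtCK. Qed.

Lemma F1 d k s (S : {set 'I_d}) : #|S| = s ->
  tensor_pow k (phi S) = vS k s S *m (vS k s S)^T.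
Proof.
move=> hS; apply/matrixP => a b; rewrite !mxE big_ord1 !mxE.
under eq_bigr => t _ do rewrite mxE.
rewrite prod_if.
have -> : [forall t, (enum_val a t \in S) && (enum_val b t \in S)] =
   inS S (enum_val a) && inS S (enum_val b).
  apply/forallP/andP => [H|[/forallP H1 /forallP H2] t].
    by split; apply/forallP => t; case/andP: (H t).
  by rewrite H1 H2.
case: (inS S (enum_val a)); case: (inS S (enum_val b)) => /=;
  rewrite ?mul0r ?mulr0 ?mul1r //.
rewrite hS -invfM sqrt_nat_sq natrX exprVn //.
Qed.

Lemma F2 d k s (S : {set 'I_d}) :
  mx_of (fun i j : tup d k => ((s ^_ k)%:R)^-1 * (inA S i && inA S j)%:R)
  = wS k s S *m (wS k s S)^T.
Proof.
apply/matrixP => a b; rewrite !mxE big_ord1 !mxE.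
case: (inA S (enum_val a)); case: (inA S (enum_val b)) => /=;
  rewrite ?mul0r ?mulr0 ?mul1r ?mulr1 //.
by rewrite -invfM sqrt_nat_sq.
Qed.

Lemma vS_real d k s (S : {set 'I_d}) : map_mx conjC (vS k s S) = vS k s S.
Proof.
apply/matrixP => a b; rewrite !mxE; apply/CrealP.
by rewrite rpredM ?realn // rpredV sqrtC_real ?ler0n.
Qed.

Lemma wS_real d k s (S : {set 'I_d}) : map_mx conjC (wS k s S) = wS k s S.
Proof.
apply/matrixP => a b; rewrite !mxE; apply/CrealP.
by rewrite rpredM ?realn // rpredV sqrtC_real ?ler0n.
Qed.

Lemma card_inS d k (S : {set 'I_d}) : #|[pred i : tup d k | inS S i]| = (#|S| ^ k)%N.
Proof.
rewrite -[in RHS](card_ord k) -card_ffun_on; apply: eq_card => i.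
by rewrite !inE.
Qed.

Lemma card_inA d k (S : {set 'I_d}) : #|[pred i : tup d k | inA S i]| = (#|S| ^_ k)%N.
Proof.
rewrite -[in RHS](card_ord k) -card_inj_ffuns_on; apply: eq_card => i.
by rewrite !inE.
Qed.

Lemma natr_neq0 (n : nat) : (0 < n)%N -> (n%:R : algC) != 0.
Proof. by move=> h; rewrite pnatr_eq0 -lt0n. Qed.

Lemma sqrt_neq0 (n : nat) : (0 < n)%N -> sqrtC (n%:R : algC) != 0.
Proof. by move=> h; rewrite sqrtC_eq0 natr_neq0. Qed.

Lemma nv d k s (S : {set 'I_d}) : #|S| = s -> (0 < s)%N ->
  ((vS k s S)^T *m vS k s S) 0 0 = 1.
Proof.
move=> hS hs; rewrite !mxE.
rewrite (eq_bigr (fun a => (inS S (enum_val a))%:R / (s ^ k)%:R)); last first.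
  move=> a _; rewrite !mxE; case: (inS S (enum_val a)) => /=;
    rewrite ?mul0r ?mulr0 // !mul1r -invfM sqrt_nat_sq //.
rewrite -mulr_suml (@sum_enum _ _ (fun i => (inS S i)%:R)) sum_bool card_inS hS.
by rewrite divff // natr_neq0 // expn_gt0 hs.
Qed.

Lemma nw d k s (S : {set 'I_d}) : #|S| = s -> (k <= s)%N ->
  ((wS k s S)^T *m wS k s S) 0 0 = 1.
Proof.
move=> hS hs; rewrite !mxE.
rewrite (eq_bigr (fun a => (inA S (enum_val a))%:R / (s ^_ k)%:R)); last first.
  move=> a _; rewrite !mxE; case: (inA S (enum_val a)) => /=;
    rewrite ?mul0r ?mulr0 // !mul1r -invfM sqrt_nat_sq //.
rewrite -mulr_suml (@sum_enum _ _ (fun i => (inA S i)%:R)) sum_bool card_inA hS.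
by rewrite divff // natr_neq0 // ffact_gt0.
Qed.

Lemma ip_vw d k s (S : {set 'I_d}) : #|S| = s -> (k <= s)%N -> (0 < s)%N ->
  ((vS k s S)^T *m wS k s S) 0 0 = sqrtC (s ^_ k)%:R / sqrtC (s ^ k)%:R.
Proof.
move=> hS hks hs; rewrite !mxE.
rewrite (eq_bigr (fun a => (inA S (enum_val a))%:R /
     (sqrtC (s ^ k)%:R * sqrtC (s ^_ k)%:R))); last first.
  move=> a _; rewrite !mxE /inA -/(inS S (enum_val a)).
  case: (inS S (enum_val a)); case: (injectiveb _) => /=;
    rewrite ?mul0r ?mulr0 // !mul1r -invfM //.
rewrite -mulr_suml (@sum_enum _ _ (fun i => (inA S i)%:R)) sum_bool card_inA hS.
have h1 : sqrtC (s ^_ k)%:R != 0 :> algC by rewrite sqrt_neq0 // ffact_gt0.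
have h2 : sqrtC (s ^ k)%:R != 0 :> algC by rewrite sqrt_neq0 // expn_gt0 hs.
rewrite -[X in X / _]sqrt_nat_sq.
move: h1 h2; set a := sqrtC (s ^_ k)%:R; set b := sqrtC (s ^ k)%:R => h1 h2.
by field; rewrite h1 h2.
Qed.

Lemma ip_wv d k s (S : {set 'I_d}) : #|S| = s -> (k <= s)%N -> (0 < s)%N ->
  ((wS k s S)^T *m vS k s S) 0 0 = sqrtC (s ^_ k)%:R / sqrtC (s ^ k)%:R.
Proof.
move=> hS hks hs; rewrite -(@ip_vw d k s S) //.
have h1 (A : 'M[algC]_1) : A 0 0 = A^T 0 0 by rewrite mxE.
by rewrite [RHS]h1 trmx_mul trmxK.
Qed.

Lemma dvw d k s (S : {set 'I_d}) : #|S| = s -> (k <= s)%N -> (0 < s)%N ->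
  ((vS k s S - wS k s S)^T *m (vS k s S - wS k s S)) 0 0 =
  2 - 2 * (sqrtC (s ^_ k)%:R / sqrtC (s ^ k)%:R).
Proof.
move=> hS hks hs.
have hB (X Y : 'M[algC]_1) : (X - Y) 0 0 = X 0 0 - Y 0 0 by rewrite !mxE.
have tB : (vS k s S - wS k s S)^T = (vS k s S)^T - (wS k s S)^T by rewrite linearB.
rewrite tB mulmxBl !mulmxBr !hB nv // nw // ip_vw // ip_wv //.
ring.
Qed.

Lemma c_bound k s : (k <= s)%N -> (0 < s)%N ->
  2 - 2 * (sqrtC (s ^_ k)%:R / sqrtC (s ^ k)%:R) <= 2 * (k%:R ^+ 2 / s%:R) :> algC.
Proof.
move=> hks hs.
have hB : (0 < s ^ k)%N by rewrite expn_gt0 hs.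
have hA : (0 < s ^_ k)%N by rewrite ffact_gt0.
set c := sqrtC (s ^_ k)%:R / sqrtC (s ^ k)%:R.
set x : algC := (s ^_ k)%:R / (s ^ k)%:R.
have c0 : 0 <= c by rewrite divr_ge0 // sqrtC_ge0 ler0n.
have cx : c ^+ 2 = x by rewrite expr_div_n !sqrtCK.
have x1 : x <= 1.
  by rewrite /x ler_pdivrMr ?ltr0n // mul1r ler_nat ffact_le.
have c1 : c <= 1.
  have := x1; rewrite -cx -[X in _ <= X](expr1n _ 2).
  by rewrite (ler_pXn2r (isT : (0 < 2)%N)) // nnegrE.
have xc : x <= c.
  by rewrite -cx expr2 -[X in _ <= X]mulr1 ler_wpM2l.
have key : 1 - x <= k%:R ^+ 2 / s%:R.
  have hn := ffact_bound s k.
  rewrite -(ler_nat algC) !natrD !natrM in hn.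
  rewrite -subr_ge0.
  have -> : k%:R ^+ 2 / s%:R - (1 - x) =
     ((s%:R * (s ^_ k)%:R + k%:R * k%:R * (s ^ k)%:R) - s%:R * (s ^ k)%:R) /
     (s%:R * (s ^ k)%:R).
    rewrite /x; field.
    by rewrite !natr_neq0.
  by rewrite divr_ge0 ?subr_ge0 // mulr_ge0 ?ler0n.
rewrite -[X in X - _](mulr1 2) -mulrBr ler_wpM2l // (le_trans _ key) //.
by rewrite lerD // lerN2.
Qed.

Lemma rank1_tc n (v : 'cV[algC]_n) : map_mx conjC v = v -> (v *m v^T)^t* = v *m v^T.
Proof. by move=> hv; rewrite trmx_mul trmxK map_mxM -map_trmx hv. Qed.

Lemma final_bound d s k : (1 <= k)%N -> (k <= s)%N -> (s <= d)%N ->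
  trnorm (Phi d s k - Phitilde d s k) <= 3 * k%:R / sqrtC s%:R.
Proof.
move=> hk hks hsd.
have hs : (0 < s)%N by apply: leq_trans hks.
set cinv : algC := (#|[set S : {set 'I_d} | #|S| == s]|%:R)^-1.
set F := fun S : {set 'I_d} => vS k s S *m (vS k s S)^T - wS k s S *m (wS k s S)^T.
have EM : Phi d s k - Phitilde d s k = cinv *: \sum_(S : {set 'I_d} | #|S| == s) F S.
  rewrite /Phi /Phitilde /unif_exp -scalerBr; congr (_ *: _).
  rewrite -sumrN -big_split; apply: eq_bigr => S /eqP hS /=.
  by rewrite (F1 k hS) F2.
have cr : conjC cinv = cinv by apply/CrealP; rewrite rpredV realn.
have Ht : (Phi d s k - Phitilde d s k)^t* = Phi d s k - Phitilde d s k.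
  rewrite EM linearZ /= map_mxZ /=; congr (_ *: _).
    by apply/CrealP; rewrite rpredV realn.
  rewrite raddf_sum map_mx_sum /=.
  apply: eq_bigr => S _; rewrite /F linearB map_mxB /=.
  by rewrite !rank1_tc ?vS_real ?wS_real.
have Hn : Phi d s k - Phitilde d s k \is normalmx.
  by rewrite qualifE /= Ht eqxx.
have [U [Uu Htr Hre]] := trnorm_normal Hn.
set T := trnorm _ in Htr Hre *.
set t : algC := sqrtC s%:R / k%:R.
have kn0 : (k%:R : algC) != 0 by rewrite natr_neq0.
have sn0 : sqrtC (s%:R : algC) != 0 by rewrite sqrt_neq0.
have tgt0 : 0 < t by rewrite divr_gt0 // ?ltr0n // lt_def sn0 sqrtC_ge0 ler0n.
have Bq : forall S : {set 'I_d}, #|S| = s ->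
   \tr (F S *m U) + (\tr (F S *m U))^* <= 6 * k%:R / sqrtC s%:R.
  move=> S hS.
  apply: (le_trans (pair_bound Uu (vS_real k s S) (wS_real k s S)
            (nv k hS hs) (nw hS hks) tgt0)).
  rewrite dvw //.
  apply: (le_trans (y := 2 * t * (2 * (k%:R ^+ 2 / s%:R)) + 2 / t)).
    by rewrite lerD // ler_wpM2l ?c_bound // mulr_ge0 // ltW.
  have ss : (s%:R : algC) = sqrtC s%:R * sqrtC s%:R by rewrite sqrt_nat_sq.
  rewrite /t.
  move: ss kn0 sn0; set a := sqrtC (s%:R : algC); set b := (k%:R : algC) => ss kn0 sn0.
  rewrite ss.
  by rewrite le_eqVlt; apply/orP; left; apply/eqP; field; rewrite kn0 sn0.
have HT : T = cinv * \sum_(S : {set 'I_d} | #|S| == s) \tr (F S *m U).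
  by rewrite Htr EM -scalemxAl mxtraceZ mulmx_suml raddf_sum.
have cardS : (0 < #|[set S : {set 'I_d} | #|S| == s]|)%N.
  by rewrite card_draws card_ord bin_gt0.
have c0 : 0 <= cinv by rewrite invr_ge0 ler0n.
have H2 : T + T^* <= 6 * k%:R / sqrtC s%:R.
  rewrite {2}HT rmorphM /= cr rmorph_sum /= {1}HT -mulrDr -big_split /=.
  apply: (le_trans (y := cinv * \sum_(S : {set 'I_d} | #|S| == s) (6 * k%:R / sqrtC s%:R))).
    rewrite ler_wpM2l // ler_sum // => S /eqP hS; exact: Bq.
  have cE : #|(fun i : {set 'I_d} => #|i| == s)| = #|[set S : {set 'I_d} | #|S| == s]|.
    by apply: eq_card => S; rewrite inE.
  set x := 6 * k%:R / sqrtC s%:R.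
  rewrite sumr_const cE -mulr_natr mulrC -mulrA /cinv mulfV ?mulr1 //.
  exact: natr_neq0.
have TT : T^* = T by apply/CrealP.
rewrite TT in H2.
have two : (0 : algC) < 2 by rewrite ltr0n.
have e1 : 2 * T = T + T by rewrite mulr_natl mulr2n.
have e2 : 2 * (3 * k%:R / sqrtC s%:R) = 6 * k%:R / sqrtC (s%:R : algC) by ring.
by rewrite -(ler_pM2l two) e1 e2.
Qed.

End Helpers.

Theorem proposition2 :
  exists C : algC, C \is Num.real /\
    forall d s k : nat, (1 <= k)%N -> (k <= s)%N -> (s <= d)%N ->
      trnorm (Phi d s k - Phitilde d s k) <= C * k%:R / sqrtC s%:R.
Proof.
exists 3; split; first by rewrite realn.
by move=> d s k h1 h2 h3; apply: Helpers.final_bound.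
Qed.
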